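(* For $n\ge1$ let $A_n$ be the set of $n\times 2$ arrays $(m_{i,j})$ with entries in $\{0,1,2\}$ such that: (i) every entry $1$ has a $0$ immediately to its left or immediately above it; (ii) no entry $0$ has a $0$ immediately to its left or immediately above it; (iii) every entry $2$ has, in the same column, a $1$ immediately above it and a $0$ immediately above that $1$ (i.e. $m_{i,j}=2$ implies $i\ge 2$, $m_{i-1,j}=1$ and $m_{i-2,j}=0$, with rows indexed from the top). Let $d_n=|A_n|$. Then $d_n=d_{n-1}+2d_{n-3}$ for $n\ge4$, with $d_1=1$, $d_2=1$, $d_3=2$.
   Context: For example $A_1=\{(0\ 1)\}$ and $A_2=\left\{\begin{pmatrix}0&1\\1&0\end{pmatrix}\right\}$. *)

(* Defs.v *)
From mathcomp Require Import all_boot all_algebra.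
Set Implicit Arguments. Unset Strict Implicit. Unset Printing Implicit Defensive.

(* An n x 2 array with entries in {0,1,2}: a matrix over 'I_3.
   Rows are indexed 0..n-1 from the top, columns 0,1 from the left. *)

Definition ent (n : nat) (M : 'M['I_3]_(n, 2)) (r c : nat) : option nat :=
  match (insub r : option 'I_n), (insub c : option 'I_2) with
  | Some i, Some j => Some (nat_of_ord (M i j))
  | _, _ => None
  end.

Definition zero_left n (M : 'M['I_3]_(n, 2)) (i j : nat) : bool :=
  (0 < j) && (ent M i j.-1 == Some 0).

Definition zero_above n (M : 'M['I_3]_(n, 2)) (i j : nat) : bool :=
  (0 < i) && (ent M i.-1 j == Some 0).

Definition validA n (M : 'M['I_3]_(n, 2)) : bool :=
  [forall i : 'I_n, forall j : 'I_2,
    [&& ((nat_of_ord (M i j) == 1) ==> (zero_left M i j || zero_above M i j)),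
        ((nat_of_ord (M i j) == 0) ==> ~~ (zero_left M i j || zero_above M i j)) &
        ((nat_of_ord (M i j) == 2) ==>
           [&& 2 <= i, ent M i.-1 j == Some 1 & ent M (i - 2) j == Some 0])]].

Definition A_set n : {set 'M['I_3]_(n, 2)} := [set M | validA M].

Definition d n : nat := #|A_set n|.

(* Main.v *)
Require Import Defs.
From mathcomp Require Import all_boot all_algebra.
From mathcomp Require Import zify.
Set Implicit Arguments. Unset Strict Implicit. Unset Printing Implicit Defensive.

Definition row := ('I_3 * 'I_3)%type.
Definition state := (option row * option row)%type.
Definition ol : seq 'I_3 := [:: @Ordinal 3 0 isT; @Ordinal 3 1 isT; @Ordinal 3 2 isT].
Definition rowl : seq row := [seq (a,b) | a <- ol, b <- ol].
Definition ostl : seq (option row) := None :: map Some rowl.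
Definition statel : seq state := [seq (a,b) | a <- ostl, b <- ostl].

Arguments rowl : simpl never.
Arguments ostl : simpl never.
Arguments statel : simpl never.

Lemma ol_all (i : 'I_3) : i \in ol.
Proof.
by case: i => [[|[|[|k]]] Hk].
Qed.
Lemma ol_uniq : uniq ol. Proof. by []. Qed.
Lemma rowl_all (r : row) : r \in rowl.
Proof. by case: r => a b; apply/allpairsP; exists (a, b); rewrite !ol_all. Qed.
Lemma rowl_uniq : uniq rowl.
Proof. by apply: allpairs_uniq => // [[a b] [c d]] _ _ /= ->. Qed.
Lemma ostl_all (o : option row) : o \in ostl.
Proof. case: o => [r|] //; rewrite /ostl in_cons; apply/orP; right; apply: map_f; exact: rowl_all. Qed.
Lemma ostl_uniq : uniq ostl.
Proof.
rewrite /ostl cons_uniq map_inj_uniq ?rowl_uniq ?andbT; last by move=> x y [].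
by apply/mapP => -[].
Qed.
Lemma statel_all (s : state) : s \in statel.
Proof. by case: s => a b; apply/allpairsP; exists (a, b); rewrite !ostl_all. Qed.
Lemma statel_uniq : uniq statel.
Proof. by apply: allpairs_uniq; rewrite ?ostl_uniq // => [[a b] [c d]] _ _ /= ->. Qed.

Definition comp (c : nat) (p : row) : nat := if c == 0 then val p.1 else val p.2.
Definition ocomp c (o : option row) : option nat := omap (comp c) o.

Definition cellok (v : nat) (zl : bool) (st : state) (c : nat) : bool :=
  [&& (v == 1) ==> (zl || (ocomp c st.1 == Some 0)),
      (v == 0) ==> ~~ (zl || (ocomp c st.1 == Some 0)) &
      (v == 2) ==> ((ocomp c st.1 == Some 1) && (ocomp c st.2 == Some 0))].

Definition okstep (st : state) (r : row) : bool :=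
  cellok (val r.1) false st 0 && cellok (val r.2) (val r.1 == 0) st 1.

Definition next (st : state) (r : row) : state := (Some r, st.1).

Definition gs (s : seq row) (k : nat) : option row := nth None (map Some s) k.
Definition stp (g : nat -> option row) (i : nat) : state :=
  (if 0 < i then g i.-1 else None, if 1 < i then g (i-2) else None).
Definition locok (g : nat -> option row) i :=
  if g i is Some r then okstep (stp g i) r else true.
Definition V (s : seq row) : bool := all (locok (gs s)) (iota 0 (size s)).
Definition last2 (s : seq row) : state := stp (gs s) (size s).

Lemma gs_rcons s r k :
  gs (rcons s r) k = if k < size s then gs s k else if k == size s then Some r else None.
Proof.
rewrite /gs map_rcons nth_rcons size_map.
case: ltnP => // H; case: eqP => // _.
Qed.

Lemma locok_ext g g' i : g =1 g' -> locok g i = locok g' i.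
Proof. by move=> H; rewrite /locok /stp !H. Qed.

Lemma stp_rcons s r i : i <= size s -> stp (gs (rcons s r)) i = stp (gs s) i.
Proof.
move=> Hi; rewrite /stp !gs_rcons.
case: i Hi => [|[|i]] Hi //=; first by rewrite Hi.
rewrite subn2 /=.
have -> : i.+1 < size s by lia.
by have -> : i < size s by lia.
Qed.

Lemma V_rcons s r : V (rcons s r) = V s && okstep (last2 s) r.
Proof.
rewrite /V size_rcons -addn1 iotaD add0n /= all_cat /= andbT.
congr andb.
  apply: eq_in_all => i; rewrite mem_iota add0n => /andP [_ Hi].
  rewrite /locok gs_rcons Hi stp_rcons //; exact: ltnW.
by rewrite /locok gs_rcons ltnn eqxx stp_rcons.
Qed.

Lemma last2_rcons s r : last2 (rcons s r) = next (last2 s) r.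
Proof.
rewrite /last2 /next /stp size_rcons /= !gs_rcons ltnn eqxx /=.
case: (size s) => [|m] //=.
by rewrite subn2 /= leqnn.
Qed.

Fixpoint alls n : seq (seq row) :=
  if n is m.+1 then [seq rcons s r | s <- alls m, r <- rowl] else [:: [::]].

Lemma mem_alls n s : (s \in alls n) = (size s == n).
Proof.
elim: n s => [|n IH] s; first by rewrite /= inE; case: s.
have -> : alls n.+1 = [seq rcons s r | s <- alls n, r <- rowl] by [].
apply/allpairsP/idP => [[[s' r] /= [H1 _ ->]]|].
  by rewrite size_rcons eqSS -IH.
case/lastP: s => [//|s r]; rewrite size_rcons eqSS => Hs.
by exists (s, r); rewrite IH Hs rowl_all.
Qed.

Lemma alls_uniq n : uniq (alls n).
Proof.
elim: n => // n IH.
have -> : alls n.+1 = [seq rcons s r | s <- alls n, r <- rowl] by [].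
apply: allpairs_uniq; rewrite ?rowl_uniq //.
by move=> [a b] [c d] _ _ /= /rcons_inj [-> ->].
Qed.

Definition cntB n (st : state) : nat := count (fun s => V s && (last2 s == st)) (alls n).

Lemma count_big T (P : pred T) l : count P l = \sum_(x <- l) P x.
Proof. by elim: l => [|x l IH]; rewrite ?big_nil ?big_cons //= IH. Qed.

Lemma sum_pick (T : eqType) (l : seq T) x (F : T -> nat) :
  uniq l -> x \in l -> \sum_(y <- l) (x == y) * F y = F x.
Proof.
elim: l => [//|y l IH] /= /andP [Hy Hu]; rewrite inE big_cons.
case: eqP => [E _|Hne /= Hx]; last by rewrite mul0n IH.
rewrite -E mul1n big_seq big1 ?addn0 // => z Hz.
have /negbTE -> : x != z by rewrite E; apply: contraNneq Hy => ->.
by rewrite mul0n.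
Qed.

Definition step (v : state -> nat) (st' : state) : nat :=
  \sum_(st <- statel) \sum_(r <- rowl) (okstep st r && (next st r == st')) * v st.

Lemma cntB_step n st' : cntB n.+1 st' = step (cntB n) st'.
Proof.
rewrite /cntB /step count_big.
have -> : alls n.+1 = [seq rcons s r | s <- alls n, r <- rowl] by [].
rewrite big_allpairs_dep /=.
transitivity (\sum_(st <- statel) \sum_(r <- rowl) \sum_(s <- alls n)
   (okstep st r && (next st r == st')) * (V s && (last2 s == st))); last first.
  apply: eq_bigr => st _; apply: eq_bigr => r _; by rewrite count_big big_distrr.
symmetry; rewrite exchange_big /=.
under eq_bigr => r _ do rewrite exchange_big /=.
rewrite exchange_big /=.
apply: eq_bigr => s _; apply: eq_bigr => r _.
rewrite V_rcons last2_rcons.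
transitivity ((okstep (last2 s) r && (next (last2 s) r == st')) * V s); last first.
  by case: (V s); case: okstep; case: (next _ _ == _).
rewrite -(sum_pick (fun st => (okstep st r && (next st r == st')) * (V s)) statel_uniq (statel_all (last2 s))).
apply: eq_bigr => st _.
by case: (last2 s == st); case: (V s); case: (okstep st r && _).
Qed.
Definition oidx (o : option row) : nat :=
  if o is Some r then (3 * val r.1 + val r.2).+1 else 0.
Definition idx (st : state) : nat := 10 * oidx st.1 + oidx st.2.

Definition st0 : state := (None, None).

Lemma idx_chk : all (fun st => (idx st < 100) && (nth st0 statel (idx st) == st)) statel.
Proof. by vm_compute. Qed.

Lemma idx_lt st : idx st < size statel.
Proof. by move/allP: idx_chk => /(_ st (statel_all st)) /andP []. Qed.

Lemma idx_nth st : nth st0 statel (idx st) = st.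
Proof. by move/allP: idx_chk => /(_ st (statel_all st)) /andP [_ /eqP]. Qed.

Definition lookup (t : seq nat) (st : state) : nat := nth 0 t (idx st).

Definition stepf (t : seq nat) (st' : state) : nat :=
  if st'.1 is Some r then sumn [seq okstep (st'.2, x) r * lookup t (st'.2, x) | x <- ostl] else 0.

Fixpoint cvt n : seq nat :=
  match n with
  | m.+1 => let t := cvt m in [seq stepf t st' | st' <- statel]
  | 0 => [seq ((st == st0) : nat) | st <- statel]
  end.

Definition base_chk : bool :=
  let v9 := cvt 9 in let v3 := cvt 3 in let v5 := cvt 5 in let v6 := cvt 6 in let v7 := cvt 7 in
  all (fun st => lookup v9 st + 2 * lookup v3 st == lookup v5 st + 3 * lookup v6 st + lookup v7 st) statel.
Lemma base_chkT : base_chk.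
Proof. by vm_compute. Qed.

Definition ddc n := let t := cvt n in sumn (map (lookup t) statel).
Lemma ddc_vals : [:: ddc 1; ddc 2; ddc 3; ddc 4; ddc 5; ddc 6; ddc 7; ddc 8] = [:: 1; 1; 2; 4; 6; 10; 18; 30].
Proof. by vm_compute. Qed.

Lemma lookup_map f st : lookup (map f statel) st = f st.
Proof. by rewrite /lookup (nth_map st0) ?idx_lt // idx_nth. Qed.

Lemma sumn_big T (l : seq T) (f : T -> nat) : sumn (map f l) = \sum_(x <- l) f x.
Proof. by elim: l => [|x l IH]; rewrite ?big_nil ?big_cons //= IH. Qed.

Lemma step_collapse v a b : step v (a, b) =
  if a is Some r0 then \sum_(x <- ostl) okstep (b, x) r0 * v (b, x) else 0.
Proof.
rewrite /step /statel big_allpairs /=.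
case: a => [r0|]; last first.
  rewrite big1 // => p _; rewrite big1 // => q _; rewrite big1 // => r _.
  by rewrite /next xpair_eqE andbF.
transitivity (\sum_(p <- ostl) (b == p) *
   \sum_(q <- ostl) \sum_(r <- rowl) (r0 == r) * (okstep (p, q) r * v (p, q))).
  apply: eq_bigr => p _; rewrite big_distrr; apply: eq_bigr => q _.
  rewrite big_distrr; apply: eq_bigr => r _ /=.
  rewrite /next xpair_eqE /=.
  rewrite (eq_sym p) (eq_sym (Some r)).
  have -> : (Some r0 == Some r) = (r0 == r) by apply/eqP/eqP => [[]|->].
  by case: (r0 == r); case: (b == p); case: okstep; rewrite ?andbF ?andbT ?mul0n ?mul1n.
rewrite (sum_pick (fun p => \sum_(q <- ostl) \sum_(r <- rowl) (r0 == r) * (okstep (p, q) r * v (p, q))) ostl_uniq (ostl_all b)).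
apply: eq_bigr => q _.
by rewrite (sum_pick (fun r => okstep (b, q) r * v (b, q)) rowl_uniq (rowl_all r0)).
Qed.

Lemma step_ext v w st : v =1 w -> step v st = step w st.
Proof. by move=> H; rewrite /step; apply: eq_bigr => x _; apply: eq_bigr => r _; rewrite H. Qed.

Lemma cvt_step n st : lookup (cvt n.+1) st = step (lookup (cvt n)) st.
Proof.
rewrite [cvt _]/= lookup_map /stepf; case: st => a b.
rewrite step_collapse; case: a => [r|] //; exact: sumn_big.
Qed.

Lemma cvt_cnt n st : lookup (cvt n) st = cntB n st.
Proof.
elim: n st => [|n IH] st.
  have -> : cvt 0 = [seq ((st == st0) : nat) | st <- statel] by [].
  rewrite lookup_map /cntB /= /last2 /stp /= eq_sym.
  by case: (_ == _).
by rewrite cvt_step cntB_step; apply: step_ext.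
Qed.

Lemma stepT v st' : step v st' =
  \sum_(st <- statel) (\sum_(r <- rowl) (okstep st r && (next st r == st'))) * v st.
Proof. by rewrite /step; apply: eq_bigr => st _; rewrite big_distrl. Qed.

Lemma step_lin a b c e f :
  (forall st, a st + 2 * b st = c st + 3 * e st + f st) ->
  forall st, step a st + 2 * step b st = step c st + 3 * step e st + step f st.
Proof.
move=> H st; rewrite !stepT !big_distrr -!big_split /=.
apply: eq_bigr => x _.
by rewrite mulnCA [3 * _]mulnCA -!mulnDr H.
Qed.

Notation cv n := (lookup (cvt n)).

Lemma cv_rel n : 3 <= n -> forall st,
  cv (n + 6) st + 2 * cv n st = cv (n + 2) st + 3 * cv (n + 3) st + cv (n + 4) st.
Proof.
elim: n => [//|n IH]; rewrite leq_eqVlt => /orP [/eqP <-|Hn] st.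
  by move/allP: base_chkT => /(_ st (statel_all st)) /eqP.
rewrite !addSn !cvt_step; apply: step_lin => st'.
exact: IH.
Qed.

Definition dd n := \sum_(st <- statel) cntB n st.

Lemma dd_rel n : 3 <= n ->
  dd (n + 6) + 2 * dd n = dd (n + 2) + 3 * dd (n + 3) + dd (n + 4).
Proof.
move=> Hn; rewrite /dd !big_distrr -!big_split /=.
by apply: eq_bigr => st _; rewrite -!cvt_cnt cv_rel.
Qed.

Lemma dd_ddc n : dd n = ddc n.
Proof. by rewrite /dd /ddc sumn_big; apply: eq_bigr => st _; rewrite cvt_cnt. Qed.

Lemma dd_main : [/\ dd 1 = 1, dd 2 = 1, dd 3 = 2 &
      forall n : nat, 4 <= n -> dd n = dd n.-1 + 2 * dd (n - 3)].
Proof.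
have E := ddc_vals; rewrite -!dd_ddc in E; case: E => E1 E2 E3 E4 E5 E6 E7 E8.
split => // n Hn.
have key : forall m, 3 <= m -> [/\ dd (m + 3) = dd (m + 2) + 2 * dd m,
   dd (m + 4) = dd (m + 3) + 2 * dd (m + 1) & dd (m + 5) = dd (m + 4) + 2 * dd (m + 2)].
  elim=> [//|m IH]; rewrite leq_eqVlt => /orP [/eqP <-|Hm].
    rewrite -[3 + 3]/6 -[3 + 2]/5 -[3 + 4]/7 -[3 + 1]/4 -[3 + 5]/8.
    by rewrite E3 E4 E5 E6 E7 E8.
  have [H1 H2 H3] := IH Hm.
  have R := dd_rel Hm.
  rewrite !addSn -!addnS; split => //; last by lia.
  by rewrite addn1 in H2.
case: (leqP 6 n) => H6.
  have [K _ _] := key (n - 3) ltac:(lia).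
  have -> : n.-1 = n - 3 + 2 by lia.
  have E : n = n - 3 + 3 by lia.
  by rewrite {1}E.
have : n = 4 \/ n = 5 by lia.
case=> ->.
  by rewrite -[4.-1]/3 -[4 - 3]/1 E4 E3 E1.
by rewrite -[5.-1]/4 -[5 - 3]/2 E5 E4 E2.
Qed.
Definition j0 : 'I_2 := ord0.
Definition j1 : 'I_2 := ord_max.

Definition rowopt n (M : 'M['I_3]_(n, 2)) (k : nat) : option row :=
  if (insub k : option 'I_n) is Some i then Some (M i j0, M i j1) else None.

Definition rowsM n (M : 'M['I_3]_(n, 2)) : seq row := [seq (M i j0, M i j1) | i <- enum 'I_n].

Lemma size_rowsM n (M : 'M['I_3]_(n, 2)) : size (rowsM M) = n.
Proof. by rewrite size_map size_enum_ord. Qed.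

Lemma gs_rowsM n (M : 'M['I_3]_(n, 2)) k : gs (rowsM M) k = rowopt M k.
Proof.
rewrite /gs /rowopt; case: insubP => [i _ <-|Hk].
  rewrite (nth_map (M i j0, M i j1)); last by rewrite size_rowsM; exact: ltn_ord.
  rewrite /rowsM (nth_map (i : 'I_n)) ?size_enum_ord ?ltn_ord //.
  by rewrite nth_ord_enum.
by apply: nth_default; rewrite size_map size_rowsM leqNgt.
Qed.

Lemma rowopt_ord n (M : 'M['I_3]_(n, 2)) (i : 'I_n) : rowopt M i = Some (M i j0, M i j1).
Proof. by rewrite /rowopt valK. Qed.

Lemma ent_row n (M : 'M['I_3]_(n, 2)) r c : c < 2 -> ent M r c = ocomp c (rowopt M r).
Proof.
move=> Hc; rewrite /ent /rowopt.
case: (insub r) => [i|] //.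
case: insubP => [j _ Hj|]; last by rewrite Hc.
rewrite /ocomp /comp /=.
case: c Hc Hj => [|[|//]] _ Hj.
  by have -> : j = j0 by apply/val_inj.
by have -> : j = j1 by apply/val_inj.
Qed.

Lemma forall_I2 (P : 'I_2 -> bool) : [forall j, P j] = P j0 && P j1.
Proof.
apply/forallP/andP => [H|[H0 H1] [[|[|k]] Hk]]; first by split; apply: H.
- by rewrite (_ : Ordinal Hk = j0) //; apply/val_inj.
- by rewrite (_ : Ordinal Hk = j1) //; apply/val_inj.
- by [].
Qed.

Lemma Some_eq (x y : nat) : (Some x == Some y) = (x == y).
Proof. by apply/eqP/eqP => [[]|->]. Qed.

Lemma cell_ok n (M : 'M['I_3]_(n, 2)) (i : 'I_n) :
  [forall j : 'I_2,
    [&& ((nat_of_ord (M i j) == 1) ==> (zero_left M i j || zero_above M i j)),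
        ((nat_of_ord (M i j) == 0) ==> ~~ (zero_left M i j || zero_above M i j)) &
        ((nat_of_ord (M i j) == 2) ==>
           [&& 2 <= i, ent M i.-1 j == Some 1 & ent M (i - 2) j == Some 0])]]
  = locok (rowopt M) i.
Proof.
rewrite forall_I2 /locok rowopt_ord /okstep /cellok /stp /zero_left /zero_above /=.
rewrite !ent_row // rowopt_ord /ocomp /comp /= !Some_eq.
have None_eq : forall x : nat, (None == Some x) = false by [].
by case: i => [[|[|k]] Hi] /=; rewrite ?None_eq ?andbF ?orbF.
Qed.

Lemma validA_V n (M : 'M['I_3]_(n, 2)) : validA M = V (rowsM M).
Proof.
rewrite /V size_rowsM.
transitivity (all (locok (rowopt M)) (iota 0 n)); last first.
  by apply: eq_all => k; apply: locok_ext => x; rewrite gs_rowsM.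
apply/forallP/allP => [H k|H i].
  rewrite mem_iota add0n => /andP [_ Hk].
  by have := H (Ordinal Hk); rewrite cell_ok.
by rewrite cell_ok; apply: H; rewrite mem_iota add0n ltn_ord.
Qed.

Definition r0 : row := (ord0, ord0).

Definition mkM n (s : seq row) : 'M['I_3]_(n, 2) :=
  \matrix_(i, j) (if j == j0 then (nth r0 s i).1 else (nth r0 s i).2).

Lemma rowsM_mkM n (s : seq row) : size s = n -> rowsM (mkM n s) = s.
Proof.
move=> Hs; apply: (@eq_from_nth _ r0); rewrite size_rowsM // => k Hk.
rewrite /rowsM (nth_map (Ordinal Hk)) ?size_enum_ord //.
have -> : nth (Ordinal Hk) (enum 'I_n) k = Ordinal Hk by apply/val_inj; rewrite /= nth_enum_ord.
rewrite !mxE /=.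
by case: (nth r0 s k).
Qed.

Lemma rowsM_inj n : injective (@rowsM n).
Proof.
move=> M1 M2 H; apply/matrixP => i j.
have := congr1 (fun s => gs s i) H.
rewrite /= !gs_rowsM !rowopt_ord => -[E0 E1].
case: j => [[|[|//]] Hj].
  by rewrite (_ : Ordinal Hj = j0) //; apply/val_inj.
by rewrite (_ : Ordinal Hj = j1) //; apply/val_inj.
Qed.

Lemma d_count n : d n = count V (alls n).
Proof.
rewrite /d cardE -(size_map (@rowsM n)) -size_filter.
apply: perm_size; apply: uniq_perm.
- rewrite map_inj_uniq ?enum_uniq //; exact: rowsM_inj.
- by rewrite filter_uniq // alls_uniq.
move=> s; rewrite mem_filter mem_alls.
apply/mapP/andP => [[M HM ->]|[HV /eqP Hs]].
  by move: HM; rewrite mem_enum inE validA_V size_rowsM => ->.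
exists (mkM n s); last by rewrite rowsM_mkM.
by rewrite mem_enum inE validA_V rowsM_mkM.
Qed.

Lemma d_dd n : d n = dd n.
Proof.
rewrite d_count /dd /cntB count_big.
symmetry; under eq_bigr => st _ do rewrite count_big.
rewrite exchange_big /=.
apply: eq_bigr => s _.
transitivity (\sum_(st <- statel) (last2 s == st) * (V s : nat)).
  by apply: eq_bigr => st _; case: (V s); case: (_ == _).
by rewrite (sum_pick (fun _ => V s : nat) statel_uniq (statel_all (last2 s))).
Qed.

Theorem theorem5 :
  [/\ d 1 = 1, d 2 = 1, d 3 = 2 &
      forall n : nat, 4 <= n -> d n = d n.-1 + 2 * d (n - 3)].
Proof.
have [H1 H2 H3 H4] := dd_main.
split; rewrite ?d_dd //.
by move=> n Hn; rewrite !d_dd; exact: H4.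
Qed.
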